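(* Let $\epsilon>0$ and $\beta\ge 2+\epsilon$ be constants, let $n$ be even, and let $G=G(n,p)$ be the Erdős–Rényi random graph on $V=\{1,\dots,n\}$ with $p=\beta\log n/n$. Fix, independently of the random graph, any two disjoint sets $N_1,N_2\subseteq V$ with $|N_1|=|N_2|=n/2$. Then, with probability tending to $1$ as $n\to\infty$: (i) $N_1,N_2$ form a $2$-partition of $G$; (ii) $M^G_{k,n}\le 2M^C_{k,n/2}+2$ for every $k\ge1$, which is $O(2k\log(n/(2k)))+2$.
   Context: $G(n,p)$ includes each of the $\binom n2$ possible edges independently with probability $p$. A set $S\subseteq V$ is a hub for $U\subseteq V$ if the induced subgraph $G_S$ is connected and every $u\in U$ has a neighbor in $S$. Pairwise disjoint sets $N_1,\dots,N_r$ form an $r$-partition of $G$ if $\bigcup_i N_i=V$ and, for every $i$, $V\setminus N_i$ is a hub for $N_i$. A measurement matrix for $G$ is a $0$-$1$ matrix with columns indexed by $V$ in which every nonzero row has a support that induces a connected subgraph of $G$. A vector is $k$-sparse if it has at most $k$ nonzero entries. $A$ identifies all $k$-sparse vectors if $Ax_1\ne Ax_2$ for every two distinct $k$-sparse $x_1,x_2\in\mathbb{R}^n$. $M^G_{k,n}$ is the minimum number of rows of a measurement matrix for $G$ that identifies all $k$-sparse vectors. $M^C_{k,N}$ is the minimum number of rows of an arbitrary $0$-$1$ matrix with $N$ columns that identifies all $k$-sparse vectors in $\mathbb{R}^N$. *)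

(* Defs.v *)
From Stdlib Require Import Reals ClassicalEpsilon.
From mathcomp Require Import all_boot.
Set Implicit Arguments. Unset Strict Implicit. Unset Printing Implicit Defensive.

(* A graph on V = 'I_n is a set E of pairs (u,v) with u < v. *)
Definition Epairs (n : nat) : {set 'I_n * 'I_n} :=
  [set e : 'I_n * 'I_n | (nat_of_ord e.1 < nat_of_ord e.2)%N].

Definition adj (n : nat) (E : {set 'I_n * 'I_n}) : rel 'I_n :=
  fun u v => ((u, v) \in E) || ((v, u) \in E).

Definition induced_connected (n : nat) (E : {set 'I_n * 'I_n}) (S : {set 'I_n}) : Prop :=
  forall u v, u \in S -> v \in S ->
    connect (fun a b => [&& a \in S, b \in S & adj E a b]) u v.

Definition hub (n : nat) (E : {set 'I_n * 'I_n}) (S U : {set 'I_n}) : Prop :=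
  induced_connected E S /\ forall u, u \in U -> exists2 s, s \in S & adj E u s.

Definition r_partition (n r : nat) (E : {set 'I_n * 'I_n}) (N : 'I_r -> {set 'I_n}) : Prop :=
  (forall i j, i != j -> [disjoint N i & N j]) /\
  \bigcup_(i < r) N i = [set: 'I_n] /\
  forall i, hub E (~: N i) (N i).

(* A 0-1 matrix with m rows and N columns is given by the supports of its rows. *)
Definition Amul (N m : nat) (A : 'I_m -> {set 'I_N}) (x : 'I_N -> R) (r : 'I_m) : R :=
  \big[Rplus/R0]_(j in A r) x j.

Definition sparse (N k : nat) (x : 'I_N -> R) : Prop :=
  exists S : {set 'I_N}, (#|S| <= k)%N /\ forall j, j \notin S -> x j = R0.

Definition identifies (N m : nat) (A : 'I_m -> {set 'I_N}) (k : nat) : Prop :=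
  forall x1 x2 : 'I_N -> R, sparse k x1 -> sparse k x2 ->
    (forall r, Amul A x1 r = Amul A x2 r) -> forall j, x1 j = x2 j.

Definition measurement_matrix (n m : nat) (E : {set 'I_n * 'I_n}) (A : 'I_m -> {set 'I_n}) : Prop :=
  forall r, A r != set0 -> induced_connected E (A r).

Definition is_MG (n : nat) (E : {set 'I_n * 'I_n}) (k M : nat) : Prop :=
  (exists A : 'I_M -> {set 'I_n}, measurement_matrix E A /\ identifies A k) /\
  forall m (A : 'I_m -> {set 'I_n}), measurement_matrix E A -> identifies A k -> (M <= m)%N.

Definition is_MC (N k M : nat) : Prop :=
  (exists A : 'I_M -> {set 'I_N}, identifies A k) /\
  forall m (A : 'I_m -> {set 'I_N}), identifies A k -> (M <= m)%N.

Definition Prob_Gnp (n : nat) (p : R) (P : {set 'I_n * 'I_n} -> Prop) : R :=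
  \big[Rplus/R0]_(E : {set 'I_n * 'I_n} | E \subset Epairs n)
     (if excluded_middle_informative (P E)
      then Rmult (pow p #|E|) (pow (Rminus 1 p) (#|Epairs n| - #|E|)) else R0).

Definition two_sets (n : nat) (A B : {set 'I_n}) : 'I_2 -> {set 'I_n} :=
  fun i => if nat_of_ord i == 0%N then A else B.

(* Main.v *)
Require Import Defs.
From Stdlib Require Import Reals Lra ClassicalEpsilon Classical.
From mathcomp Require Import all_boot zify.
From HB Require Import structures.
Set Implicit Arguments. Unset Strict Implicit. Unset Printing Implicit Defensive.

Section Graph.
Variable n : nat.
Implicit Types (X Y S T W : {set 'I_n}) (E : {set 'I_n * 'I_n}).

Definition cut X Y : {set 'I_n * 'I_n} :=
  [set e in Epairs n | ((e.1 \in X) && (e.2 \in Y)) || ((e.1 \in Y) && (e.2 \in X))].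

Lemma cut_sub X Y : cut X Y \subset Epairs n.
Proof. by apply/subsetP => e; rewrite inE => /andP []. Qed.

Lemma cutC X Y : cut X Y = cut Y X.
Proof. by apply/setP => e; rewrite !inE orbC. Qed.

Definition ordp (ab : 'I_n * 'I_n) : 'I_n * 'I_n :=
  if (nat_of_ord ab.1 < nat_of_ord ab.2)%N then ab else (ab.2, ab.1).

Lemma cut_card X Y : [disjoint X & Y] -> (#|X| * #|Y| <= #|cut X Y|)%N.
Proof.
move=> dXY.
have neq : forall a b, a \in X -> b \in Y -> a != b.
  move=> a b aX bY; apply/eqP => eab; move: dXY; rewrite -setI_eq0 => /eqP /setP /(_ a).
  by rewrite !inE aX eab bY.
rewrite -cardsX -(@card_in_imset _ _ ordp).
  apply: subset_leq_card; apply/subsetP => e /imsetP [[a b]].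
  rewrite inE /= => /andP [aX bY] ->; rewrite /ordp /= !inE /=.
  have := neq _ _ aX bY; case: (ltngtP a b) => hab //=.
  - by rewrite hab aX bY.
  - by rewrite hab aX bY orbT.
  - by move: hab => /val_inj ->; rewrite eqxx.
move=> [a b] [a' b']; rewrite !inE /= => /andP [aX bY] /andP [aX' bY'].
rewrite /ordp /=.
have dis : forall z, z \in X -> z \in Y -> False.
  by move=> z zX zY; have := neq _ _ zX zY; rewrite eqxx.
case: ifP => _; case: ifP => _ //.
- by case=> e1 e2; subst; exfalso; apply: (dis a') .
- by case=> e1 e2; subst; exfalso; apply: (dis b').
- by case=> -> ->.
Qed.

Lemma cut_edge E X Y : ~~ [disjoint E & cut X Y] ->
  exists a b, [/\ a \in X, b \in Y & adj E a b].
Proof.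
rewrite -setI_eq0 => /set0Pn [[a b]]; rewrite !inE /= => /andP [abE /andP [_ H]].
case/orP: H => /andP [h1 h2].
  by exists a, b; split => //; rewrite /adj abE.
by exists b, a; split => //; rewrite /adj abE orbT.
Qed.

Lemma connected_of_cuts E S :
  (forall T, T \subset S -> (0 < #|T|)%N -> (#|T| < #|S|)%N -> ~~ [disjoint E & cut T (S :\: T)]) ->
  induced_connected E S.
Proof.
move=> H u v uS vS.
set rel := (fun a b => [&& a \in S, b \in S & adj E a b]).
pose T := [set w in S | connect rel u w].
have sTS : T \subset S by apply/subsetP => w; rewrite inE => /andP [].
have uT : u \in T by rewrite inE uS connect0.
suff ST : T = S by move: vS; rewrite -ST inE => /andP [].
apply/eqP; rewrite eqEcard sTS /= leqNgt; apply/negP => lt.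
have T0 : (0 < #|T|)%N by apply/card_gt0P; exists u.
case/cut_edge: (H T sTS T0 lt) => a [b [aT bST ab]].
move: bST; rewrite inE => /andP [bT bS]; move/negP: bT; apply.
rewrite inE bS; move: aT; rewrite inE => /andP [aS cua] /=.
by apply: connect_trans cua (connect1 _); rewrite /rel aS bS ab.
Qed.

Lemma connected_of_small_cuts E S :
  (forall T, T \subset S -> (0 < #|T|)%N -> (2 * #|T| <= #|S|)%N -> ~~ [disjoint E & cut T (S :\: T)]) ->
  induced_connected E S.
Proof.
move=> H; apply: connected_of_cuts => T sTS T0 TS.
have cST : #|S :\: T| = (#|S| - #|T|)%N by rewrite cardsD (setIidPr sTS).
case: (leqP (2 * #|T|) #|S|) => h; first exact: H.
have e : S :\: (S :\: T) = T by rewrite setDDr setDv set0U (setIidPr sTS).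
rewrite cutC -[X in cut _ X]e; apply: H; first exact: subsetDl.
  by rewrite cST subn_gt0.
by rewrite cST; lia.
Qed.

Lemma nbr_of_cut E S u : ~~ [disjoint E & cut [set u] S] -> exists2 s, s \in S & adj E u s.
Proof.
by case/cut_edge => a [b [/set1P -> bS ab]]; exists b.
Qed.

End Graph.
Local Open Scope R_scope.
Local Open Scope R_scope.
HB.instance Definition _ := Monoid.isComLaw.Build R R0 Rplus (fun a b c => esym (Rplus_assoc a b c)) Rplus_comm Rplus_0_l.
HB.instance Definition _ := Monoid.isComLaw.Build R R1 Rmult (fun a b c => esym (Rmult_assoc a b c)) Rmult_comm Rmult_1_l.
HB.instance Definition _ := Monoid.isMulLaw.Build R R0 Rmult Rmult_0_l Rmult_0_r.
HB.instance Definition _ := Monoid.isAddLaw.Build R Rmult Rplus Rmult_plus_distr_r Rmult_plus_distr_l.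


Lemma key (T : finType) (g : T -> bool -> R) :
  \big[Rplus/R0]_(E : {set T}) \big[Rmult/R1]_(e : T) g e (e \in E)
  = \big[Rmult/R1]_(e : T) (g e true + g e false).
Proof.
have -> : \big[Rmult/R1]_(e : T) (g e true + g e false)
   = \big[Rmult/R1]_(e : T) \big[Rplus/R0]_(b : bool) g e b.
  by apply: eq_bigr => e _; rewrite big_bool /= Rplus_comm.
rewrite bigA_distr_bigA.
rewrite (reindex (fun f : {ffun T -> bool} => [set x | f x])) /=.
  by apply: eq_bigr => f _; apply: eq_bigr => e _; rewrite inE.
exists (fun A : {set T} => [ffun x => x \in A]) => [f _ | A _].
  by apply/ffunP => x; rewrite ffunE inE.
by apply/setP => x; rewrite inE ffunE.
Qed.

Lemma iter_pow c k : iter k (Rmult c) R1 = c ^ k.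
Proof. by elim: k => //= k ->. Qed.

Lemma prod_if_const (T : finType) (A : {set T}) c :
  \big[Rmult/R1]_(e : T) (if e \in A then c else R1) = c ^ #|A|.
Proof. by rewrite -big_mkcond big_const iter_pow. Qed.

Lemma sum_le (I : Type) (r : seq I) (P : pred I) (f g : I -> R) :
  (forall i, P i -> f i <= g i) ->
  \big[Rplus/R0]_(i <- r | P i) f i <= \big[Rplus/R0]_(i <- r | P i) g i.
Proof.
move=> H; apply: (big_ind2 (fun x y => x <= y)) => //; first lra.
by move=> ? ? ? ? ? ?; lra.
Qed.

Lemma sum_ge0 (I : Type) (r : seq I) (P : pred I) (f : I -> R) :
  (forall i, P i -> 0 <= f i) -> 0 <= \big[Rplus/R0]_(i <- r | P i) f i.
Proof.
move=> H; apply: (big_ind (fun x => 0 <= x)) => //; first lra.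
by move=> ? ? ? ?; lra.
Qed.

Lemma prod_ge0 (I : Type) (r : seq I) (P : pred I) (f : I -> R) :
  (forall i, P i -> 0 <= f i) -> 0 <= \big[Rmult/R1]_(i <- r | P i) f i.
Proof.
move=> H; apply: (big_ind (fun x => 0 <= x)) => //; first lra.
by move=> ? ? ? ?; apply: Rmult_le_pos.
Qed.

Lemma le_sum_seq (I : eqType) (r : seq I) (f : I -> R) x :
  (forall i, 0 <= f i) -> x \in r -> f x <= \big[Rplus/R0]_(i <- r) f i.
Proof.
move=> H; elim: r => //= y r IH; rewrite inE big_cons => /orP [/eqP -> | /IH].
  have := @sum_ge0 I r (fun _ => true) f (fun i _ => H i); lra.
have := H y; lra.
Qed.

Section Prob.
Variable n : nat.
Variable p : R.
Hypothesis hp : 0 <= p <= 1.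
Local Notation T := ('I_n * 'I_n)%type.
Local Notation U := (Epairs n).

Definition hw (e : T) (b : bool) : R :=
  if e \in U then (if b then p else 1 - p) else (if b then 0 else 1).
Definition omega (E : {set T}) : R := \big[Rmult/R1]_(e : T) hw e (e \in E).

Lemma omega_ge0 (E : {set T}) : 0 <= omega E.
Proof.
apply: prod_ge0 => e _; rewrite /hw; case: (e \in U); case: (e \in E); lra.
Qed.

Lemma omega_eq (E : {set T}) : E \subset U -> omega E = p ^ #|E| * (1 - p) ^ (#|U| - #|E|).
Proof.
move=> sEU.
rewrite -(prod_if_const E) -[(#|U| - _)%N](_ : #|U :\: E| = _); last first.
  by rewrite cardsD (setIidPr sEU).
rewrite -prod_if_const -big_split /=; apply: eq_bigr => e _.
rewrite /hw in_setD; case: (boolP (e \in E)) => eE.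
  by rewrite (subsetP sEU _ eE) /=; ring.
by case: (e \in U) => /=; ring.
Qed.

Lemma omega_0 (E : {set T}) : ~~ (E \subset U) -> omega E = 0.
Proof.
case/subsetPn => e eE eU; rewrite /omega (bigD1 e) //= /hw (negbTE eU) eE.
by rewrite Rmult_0_l.
Qed.

Lemma avoid (F : {set T}) : F \subset U ->
  \big[Rplus/R0]_(E : {set T}) (if [disjoint E & F] then omega E else 0)
  = (1 - p) ^ #|F|.
Proof.
move=> sFU.
pose h' e b := hw e b * (if e \in F then (if b then 0 else 1) else 1).
transitivity (\big[Rplus/R0]_(E : {set T}) \big[Rmult/R1]_(e : T) h' e (e \in E)).
  apply: eq_bigr => E _; rewrite /h' big_split /=.
  case: (boolP [disjoint E & F]) => dEF.
    rewrite [X in _ = _ * X]big1 ?Rmult_1_r // => e _.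
    case: (boolP (e \in F)) => // eF; case: (boolP (e \in E)) => // eE.
    by move: dEF; rewrite disjoint_subset => /subsetP /(_ e eE); rewrite inE eF.
  move: dEF; rewrite disjoint_subset => /subsetPn [e eE]; rewrite inE negbK => eF.
  by rewrite [X in _ = _ * X](bigD1 e) //= eF eE Rmult_0_l Rmult_0_r.
rewrite key -prod_if_const; apply: eq_bigr => e _; rewrite /h' /hw.
case: (boolP (e \in F)) => eF.
  by rewrite (subsetP sFU _ eF); ring.
by case: (e \in U); ring.
Qed.

Lemma total : \big[Rplus/R0]_(E : {set T}) omega E = 1.
Proof.
transitivity ((1-p)^#|(set0 : {set T})|); last by rewrite cards0.
rewrite -(avoid (sub0set U)); apply: eq_bigr => E _.
by rewrite -setI_eq0 setI0 eqxx.
Qed.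

Lemma prob_omega (Q : {set T} -> Prop) :
  @Prob_Gnp n p Q = \big[Rplus/R0]_(E : {set T})
     (if excluded_middle_informative (Q E) then omega E else 0).
Proof.
rewrite /Prob_Gnp big_mkcond; apply: eq_bigr => E _.
case: (boolP (E \subset U)) => sEU.
  by destruct (excluded_middle_informative (Q E)); rewrite ?omega_eq.
by rewrite omega_0 //; destruct (excluded_middle_informative (Q E)).
Qed.

Lemma prob_lb (Q : {set T} -> Prop) (s : seq {set T}) :
  (forall F, F \in s -> F \subset U) ->
  (forall E : {set T}, E \subset U -> (forall F, F \in s -> ~~ [disjoint E & F]) -> Q E) ->
  1 - \big[Rplus/R0]_(F <- s) (1 - p) ^ #|F| <= @Prob_Gnp n p Q.
Proof.
move=> sU HQ.
have -> : \big[Rplus/R0]_(F <- s) (1 - p) ^ #|F| =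
   \big[Rplus/R0]_(E : {set T}) \big[Rplus/R0]_(F <- s)
       (if [disjoint E & F] then omega E else 0).
  rewrite exchange_big /= big_seq_cond [in RHS]big_seq_cond.
  by apply: eq_bigr => F /andP [/sU sFU _]; rewrite avoid.
rewrite prob_omega -[X in X - _ <= _]total.
have -> : \big[Rplus/R0]_(E : {set T}) omega E =
  \big[Rplus/R0]_(E : {set T})
     (if excluded_middle_informative (Q E) then omega E else 0)
  + \big[Rplus/R0]_(E : {set T})
    (if excluded_middle_informative (Q E) then 0 else omega E).
  rewrite -big_split /=; apply: eq_bigr => E _.
  by destruct (excluded_middle_informative (Q E)); simpl; ring.
suff : \big[Rplus/R0]_(E : {set T})
    (if excluded_middle_informative (Q E) then 0 else omega E) <=
  \big[Rplus/R0]_(E : {set T}) \big[Rplus/R0]_(F <- s)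
       (if [disjoint E & F] then omega E else 0)  by move=> ?; lra.
apply: sum_le => E _.
have H0 : forall F : {set T}, 0 <= (if [disjoint E & F] then omega E else 0).
  by move=> F; case: [disjoint E & F]; [apply: omega_ge0 | apply: Rle_refl].
case: (excluded_middle_informative (Q E)) => /= HE; first by apply: sum_ge0 => F _; exact: H0.
case: (boolP (E \subset U)) => sEU; last first.
  by rewrite [X in X <= _]omega_0 //; apply: sum_ge0 => F _; exact: H0.
have [F Fs dEF] : exists2 F, F \in s & [disjoint E & F].
  apply: NNPP => Hn; apply: HE; apply: HQ => // F Fs; apply/negP => dEF.
  by apply: Hn; exists F.
have := @le_sum_seq _ s (fun F : {set T} => if [disjoint E & F] then omega E else 0) F H0 Fs.
by rewrite /= dEF.
Qed.

End Prob.

Lemma sumU (n : nat) (X Y : {set 'I_n}) (x : 'I_n -> R) : [disjoint X & Y] ->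
  \big[Rplus/R0]_(j in X :|: Y) x j =
  \big[Rplus/R0]_(j in X) x j + \big[Rplus/R0]_(j in Y) x j.
Proof.
move=> d; rewrite -bigU //; apply: eq_bigl => j; by rewrite !inE.
Qed.

Lemma half_ident n h M (A : 'I_M -> {set 'I_h}) k (P Q : {set 'I_n}) (f : 'I_h -> 'I_n) :
  identifies A k -> injective f -> (forall i, f i \in P) -> [disjoint P & Q] ->
  forall x1 x2, sparse k x1 -> sparse k x2 ->
  (forall r, \big[Rplus/R0]_(j in f @: A r :|: Q) x1 j = \big[Rplus/R0]_(j in f @: A r :|: Q) x2 j) ->
  \big[Rplus/R0]_(j in Q) x1 j = \big[Rplus/R0]_(j in Q) x2 j ->
  forall i, x1 (f i) = x2 (f i).
Proof.
move=> idA injf fP dPQ x1 x2 s1 s2 Hr HQ.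
have dAQ : forall r, [disjoint f @: A r & Q].
  move=> r; apply: disjointWl dPQ; apply/subsetP => j /imsetP [i _ ->]; exact: fP.
have spf : forall x, sparse k x -> sparse k (fun i => x (f i)).
  move=> x [S [cS HS]]; exists (f @^-1: S); split.
    apply: leq_trans cS; rewrite -(card_imset _ injf); apply: subset_leq_card.
    by apply/subsetP => j /imsetP [i]; rewrite inE => ? ->.
  by move=> i; rewrite inE => /HS.
apply: (idA (fun i => x1 (f i)) (fun i => x2 (f i)) (spf _ s1) (spf _ s2)) => r.
have := Hr r; rewrite !sumU // HQ !big_imset /Amul; first (move=> H; exact: (Rplus_eq_reg_r _ _ _ H)).
  by move=> a b _ _; apply: injf.
by move=> a b _ _; apply: injf.
Qed.

Lemma conn_union n (E : {set 'I_n * 'I_n}) (S X : {set 'I_n}) :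
  induced_connected E S -> (forall u, u \in X -> exists2 s, s \in S & adj E u s) ->
  induced_connected E (X :|: S).
Proof.
move=> cS nX.
set rS := fun a b => [&& a \in S, b \in S & adj E a b].
set rU := fun a b => [&& a \in X :|: S, b \in X :|: S & adj E a b].
have sub : forall a b, connect rS a b -> connect rU a b.
  apply: connect_sub => a b /and3P [aS bS ab]; apply: connect1.
  by rewrite /rU !inE aS bS !orbT ab.
have adjC : forall a b, adj E a b = adj E b a by move=> a b; rewrite /adj orbC.
have toS : forall u, u \in X :|: S -> exists2 s, s \in S & connect rU u s /\ connect rU s u.
  move=> u; rewrite inE => /orP [uX | uS]; last by exists u => //; split; apply: connect0.
  case: (nX u uX) => s sS us; exists s => //; split; apply: connect1;
    by rewrite /rU !inE uX sS !orbT //= ?us // adjC us.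
move=> u v uU vU; case: (toS u uU) => su suS [h1 _]; case: (toS v vU) => sv svS [_ h2].
apply: connect_trans h1 _; apply: connect_trans _ h2; exact: sub (cS _ _ suS svS).
Qed.

Section PartII.
Variables (n h : nat) (E : {set 'I_n * 'I_n}) (N1 N2 : {set 'I_n}).
Hypotheses (dN : [disjoint N1 & N2]) (cov : forall j, (j \in N1) || (j \in N2))
  (H1 : #|N1| = h) (H2 : #|N2| = h) (hub1 : hub E N2 N1) (hub2 : hub E N1 N2).

Lemma enum_bij (N : {set 'I_n}) (HN : #|N| = h) : exists f : 'I_h -> 'I_n,
  [/\ injective f, forall i, f i \in N & forall j, j \in N -> exists i, f i = j].
Proof.
exists (fun i => enum_val (cast_ord (esym HN) i)); split.
- by move=> i j /enum_val_inj /cast_ord_inj.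
- by move=> i; apply: enum_valP.
move=> j jN; exists (cast_ord HN (enum_rank_in jN j)).
by rewrite cast_ordK enum_rankK_in.
Qed.

Lemma part_ii k MG MC : is_MG E k MG -> is_MC h k MC -> (MG <= 2 * MC + 2)%N.
Proof.
move=> [_ minG] [[A idA] _].
have [f1 [inj1 f1N fs1]] := enum_bij H1.
have [f2 [inj2 f2N fs2]] := enum_bij H2.
pose sel (r : nat) : {set 'I_h} := if insub r is Some i then A i else set0.
pose B (r : 'I_((2 * MC + 2)%N)) : {set 'I_n} :=
  if (r < MC)%N then f1 @: sel r :|: N2
  else if (r < 2 * MC)%N then f2 @: sel (r - MC)%N :|: N1
  else if (r == 2 * MC :> nat)%N then N2 else N1.
apply: (minG _ B).
  move=> r _; rewrite /B.
  case: ifP => _; [|case: ifP => _; [|case: ifP => _]].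
  - apply: conn_union; first by case: hub1.
    by move=> u /imsetP [i _ ->]; case: hub1 => _; apply; apply: f1N.
  - apply: conn_union; first by case: hub2.
    by move=> u /imsetP [i _ ->]; case: hub2 => _; apply; apply: f2N.
  - by case: hub1.
  - by case: hub2.
move=> x1 x2 s1 s2 Hm.
have selK : forall i : 'I_MC, sel i = A i by move=> i; rewrite /sel valK.
have r2 : (2 * MC < 2 * MC + 2)%N by rewrite addn2 ltnS leqnSn.
have r3 : (2 * MC + 1 < 2 * MC + 2)%N by rewrite ltn_add2l.
have Q2 := Hm (Ordinal r2); have Q1 := Hm (Ordinal r3).
rewrite /Amul /B /= in Q1 Q2.
have e1 : (2 * MC < MC)%N = false by apply/negbTE; rewrite -leqNgt; lia.
have e3 : (2 * MC + 1 < MC)%N = false by apply/negbTE; rewrite -leqNgt; lia.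
have e4 : (2 * MC + 1 < 2 * MC)%N = false by apply/negbTE; rewrite -leqNgt; lia.
have e5 : (2 * MC + 1 == 2 * MC)%N = false by apply/negbTE; lia.
rewrite e1 ltnn eqxx in Q2; rewrite e3 e4 e5 in Q1.
have R1 : forall i : 'I_h, x1 (f1 i) = x2 (f1 i).
  apply: (half_ident idA inj1 f1N dN s1 s2) => // i.
  have ri : (i < 2 * MC + 2)%N by have := ltn_ord i; lia.
  by have := Hm (Ordinal ri); rewrite /Amul /B /= ltn_ord selK.
have R2 : forall i : 'I_h, x1 (f2 i) = x2 (f2 i).
  have dN' : [disjoint N2 & N1] by rewrite disjoint_sym.
  apply: (half_ident idA inj2 f2N dN' s1 s2) => // i.
    have ri : (MC + i < 2 * MC + 2)%N by have := ltn_ord i; lia.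
    have := Hm (Ordinal ri); rewrite /Amul /B /=.
    have -> : (MC + i < MC)%N = false by apply/negbTE; rewrite -leqNgt; lia.
    have -> : (MC + i < 2 * MC)%N = true by have := ltn_ord i; lia.
    by rewrite addKn selK.
move=> j; case/orP: (cov j) => [/fs1 [i <-] | /fs2 [i <-]]; [exact: R1 | exact: R2].
Qed.

End PartII.

Lemma pow_le_mono (q : R) (a b : nat) : 0 <= q <= 1 -> (a <= b)%N -> q ^ b <= q ^ a.
Proof.
move=> hq /subnKC <-; rewrite pow_add.
have : q ^ (b - a)%N <= 1.
  elim: (b - a)%N => /= [|k IH]; first lra.
  have := pow_le q k (proj1 hq); nra.
have := pow_le q a (proj1 hq); nra.
Qed.

Lemma exp_le x y : x <= y -> exp x <= exp y.
Proof. by case/Rle_lt_or_eq_dec => [/exp_increasing /Rlt_le | ->] //; apply: Rle_refl. Qed.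

Lemma exp_pow a (k : nat) : exp a ^ k = exp (INR k * a).
Proof.
elim: k => [|k IH]; first by rewrite /= Rmult_0_l exp_0.
rewrite S_INR /= IH -exp_plus; congr exp; ring.
Qed.

Lemma exp_pos' x : 0 <= exp x.
Proof. by apply: Rlt_le; apply: exp_pos. Qed.

Lemma term_bound p K (t m : nat) : 0 <= p <= 1 -> 0 <= K -> (2 * t <= m)%N ->
  (1 - p) ^ (t * (m - t)) <= exp (- p * (INR m - K)) ^ t + exp (- p * K * INR m / 2).
Proof.
move=> hp hK htm.
have h1 : (1 - p) ^ (t * (m - t)) <= exp (- p * (INR t * (INR m - INR t))).
  rewrite -minus_INR; last by apply/leP; lia.
  rewrite -mult_INR.
  have -> : - p * INR (t * (m - t)) = INR (t * (m - t)) * (- p) by ring.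
  rewrite -exp_pow; apply: pow_incr; have := exp_ineq1_le (- p); lra.
have hm : 2 * INR t <= INR m.
  have : (INR (2 * t) <= INR m) by apply: le_INR; apply/leP.
  by rewrite mult_INR.
have ht : 0 <= INR t by apply: pos_INR.
case: (Rle_lt_dec (INR t) K) => htK.
  rewrite exp_pow; have := exp_pos' (- p * K * INR m / 2).
  suff : exp (- p * (INR t * (INR m - INR t))) <= exp (INR t * (- p * (INR m - K))) by lra.
  apply: exp_le.
  have : 0 <= p * (INR t * (K - INR t)) by apply: Rmult_le_pos; [lra | apply: Rmult_le_pos; lra].
  nra.
have := exp_pos' (- p * (INR m - K)); move/(pow_le _ t) => hy.
suff : exp (- p * (INR t * (INR m - INR t))) <= exp (- p * K * INR m / 2) by lra.
apply: exp_le.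
have h2 : K * (INR m / 2) <= INR t * (INR m - INR t).
  have : K * (INR m - INR t) <= INR t * (INR m - INR t) by apply: Rmult_le_compat_r; lra.
  have : K * (INR m / 2) <= K * (INR m - INR t) by apply: Rmult_le_compat_l; lra.
  lra.
have : p * (K * (INR m / 2)) <= p * (INR t * (INR m - INR t)) by apply: Rmult_le_compat_l; lra.
lra.
Qed.

Lemma sum_sub_pred (I : finType) (P Q : pred I) (g : I -> R) :
  (forall i, P i -> Q i) -> (forall i, Q i -> 0 <= g i) ->
  \big[Rplus/R0]_(i | P i) g i <= \big[Rplus/R0]_(i | Q i) g i.
Proof.
move=> PQ g0; rewrite big_mkcond [X in _ <= X]big_mkcond; apply: sum_le => i _.
case: (boolP (P i)) => Pi; first by rewrite (PQ _ Pi); apply: Rle_refl.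
by case: (boolP (Q i)) => Qi; [apply: g0 | apply: Rle_refl].
Qed.

Lemma sum_pow_subsets (T : finType) (S : {set T}) (y : R) :
  \big[Rplus/R0]_(A : {set T} | A \subset S) y ^ #|A| = (1 + y) ^ #|S|.
Proof.
pose g e (b : bool) := if e \in S then (if b then y else 1) else (if b then 0 else 1).
transitivity (\big[Rplus/R0]_(A : {set T}) \big[Rmult/R1]_(e : T) g e (e \in A)).
  rewrite big_mkcond; apply: eq_bigr => A _.
  case: (boolP (A \subset S)) => sAS.
    rewrite -prod_if_const; apply: eq_bigr => e _; rewrite /g.
    by case: (boolP (e \in A)) => eA; [rewrite (subsetP sAS _ eA) | case: (e \in S)].
  case/subsetPn: sAS => e eA eS; rewrite (bigD1 e) //= /g (negbTE eS) eA.
  by rewrite Rmult_0_l.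
rewrite key -prod_if_const; apply: eq_bigr => e _; rewrite /g.
by case: (e \in S); [apply: Rplus_comm | apply: Rplus_0_l].
Qed.

Lemma iter_add c k : iter k (Rplus c) R0 = INR k * c.
Proof.
elim: k => [|k IH]; first by rewrite /= Rmult_0_l.
by rewrite S_INR /= IH; ring.
Qed.

Section Flist.
Variable n : nat.
Implicit Types (S W T : {set 'I_n}).

Definition Tset S : {set {set 'I_n}} :=
  [set T : {set 'I_n} | [&& T \subset S, (0 < #|T|)%N & (2 * #|T| <= #|S|)%N]].

Definition flist S W : seq {set 'I_n * 'I_n} :=
  [seq cut T (S :\: T) | T <- enum (Tset S)] ++ [seq cut [set u] S | u <- enum W].

Lemma flist_sub S W F : F \in flist S W -> F \subset Epairs n.
Proof.
rewrite mem_cat => /orP [] /mapP [x _ ->]; exact: cut_sub.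
Qed.

Lemma flist_good S W (E : {set 'I_n * 'I_n}) : (forall F, F \in flist S W -> ~~ [disjoint E & F]) -> hub E S W.
Proof.
move=> H; split.
  apply: connected_of_small_cuts => T sTS T0 T2; apply: H.
  by rewrite mem_cat; apply/orP; left; apply: map_f; rewrite mem_enum inE sTS T0 T2.
move=> u uW; apply: nbr_of_cut; apply: H.
by rewrite mem_cat; apply/orP; right; apply: map_f; rewrite mem_enum.
Qed.

Lemma flist_cost S W p K : 0 <= p <= 1 -> 0 <= K -> [disjoint S & W] ->
  \big[Rplus/R0]_(F <- flist S W) (1 - p) ^ #|F| <=
  ((1 + exp (- p * (INR #|S| - K))) ^ #|S| - 1)
  + exp (- p * K * INR #|S| / 2) * 2 ^ #|S| + INR #|W| * (1 - p) ^ #|S|.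
Proof.
move=> hp hK dSW.
set y := exp (- p * (INR #|S| - K)); set z := exp (- p * K * INR #|S| / 2).
have hq : 0 <= 1 - p <= 1 by lra.
have hy : 0 <= y by apply: exp_pos'.
have hz : 0 <= z by apply: exp_pos'.
rewrite big_cat !big_map !big_enum /=.
have P1 : \big[Rplus/R0]_(T in Tset S) (1 - p) ^ #|cut T (S :\: T)| <=
          \big[Rplus/R0]_(T in Tset S) (y ^ #|T| + z).
  apply: sum_le => T; rewrite inE => /and3P [sTS T0 T2].
  have cST : #|S :\: T| = (#|S| - #|T|)%N by rewrite cardsD (setIidPr sTS).
  apply: Rle_trans _ (term_bound hp hK T2).
  apply: pow_le_mono => //; rewrite -cST; apply: cut_card.
  by rewrite disjoint_subset; apply/subsetP => x; rewrite !inE => ->.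
have P2 : \big[Rplus/R0]_(T in Tset S) (y ^ #|T| + z) <=
          \big[Rplus/R0]_(T : {set 'I_n} | (T \subset S) && (T != set0)) (y ^ #|T| + z).
  apply: sum_sub_pred.
    move=> T; rewrite inE => /and3P [-> T0 _] /=.
    by apply/eqP => T0'; move: T0; rewrite T0' cards0.
  by move=> T _; have := pow_le y #|T| hy; lra.
have P3 : \big[Rplus/R0]_(T : {set 'I_n} | T \subset S) (y ^ #|T| + z) =
   (1 + y) ^ #|S| + z * 2 ^ #|S|.
  rewrite big_split /= sum_pow_subsets; congr (_ + _).
  have -> : (2 = 1 + 1) by ring.
  rewrite -sum_pow_subsets big_distrr /=; apply: eq_bigr => T _; rewrite pow1; ring.
have P4 : \big[Rplus/R0]_(T : {set 'I_n} | T \subset S) (y ^ #|T| + z) =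
   (y ^ #|(set0 : {set 'I_n})| + z) +
   \big[Rplus/R0]_(T : {set 'I_n} | (T \subset S) && (T != set0)) (y ^ #|T| + z).
  by rewrite (bigD1 set0) ?sub0set.
rewrite cards0 pow_O in P4.
have P5 : \big[Rplus/R0]_(u in W) (1 - p) ^ #|cut [set u] S| <=
          \big[Rplus/R0]_(u in W) (1 - p) ^ #|S|.
  apply: sum_le => u uW; apply: pow_le_mono => //.
  rewrite -[#|S|]mul1n -(cards1 u); apply: cut_card.
  rewrite disjoint_subset; apply/subsetP => x; rewrite !inE => /eqP ->.
  by apply/negP => uS; move: dSW; rewrite disjoint_subset => /subsetP /(_ u uS); rewrite inE uW.
rewrite big_const iter_add in P5.
apply: Rle_trans; first by apply: Rplus_le_compat; [exact: P1 | exact: P5].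
apply: Rplus_le_compat_r; apply: Rle_trans; first exact: P2.
have P6 : \big[Rplus/R0]_(T : {set 'I_n} | (T \subset S) && (T != set0)) (y ^ #|T| + z)
   = (1 + y) ^ #|S| + z * 2 ^ #|S| - (1 + z).
  by rewrite -P3 P4; ring.
rewrite P6. move: ((1 + y) ^ #|S|) (z * 2 ^ #|S|) => a b. lra.
Qed.

End Flist.



Definition eta_of eps := eps / (2 * (2 + eps)).

Lemma side_small eps beta c L (mn : nat) :
  0 < eps -> 2 + eps <= beta -> 0 < c <= 1/4 -> 1 <= L -> 4 * beta <= L ->
  exp (- eps * L / 4) <= c -> exp (ln 2 - eta_of eps * beta * L / 4) <= c ->
  INR mn * 2 = exp L ->
  0 <= beta * L / exp L <= 1 /\
  ((1 + exp (- (beta * L / exp L) * (INR mn - eta_of eps * INR mn))) ^ mn - 1)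
   + exp (- (beta * L / exp L) * (eta_of eps * INR mn) * INR mn / 2) * 2 ^ mn
    + INR mn * (1 - beta * L / exp L) ^ mn <= 4 * c.
Proof.
move=> he hb hc hL hL4 ha hbb hm.
set m := INR mn in hm *; set p := beta * L / exp L; set eta := eta_of eps in hbb *.
have heta : eta * (2 + eps) = eps / 2 by rewrite /eta /eta_of; field; lra.
have heta0 : 0 < eta by rewrite /eta /eta_of; apply: Rdiv_lt_0_compat; lra.
have heta1 : eta < 1.
  have : eta * (2 + eps) < 1 * (2 + eps) by rewrite heta; lra.
  by move/Rmult_lt_reg_r; apply; lra.
set N := exp L in hm p *.
have hN : 0 < N by apply: exp_pos.
have hN2 : 1 + L <= N by apply: exp_ineq1_le.
have hm0 : 0 < m by lra.
have hpm : p * m = beta * L / 2 by rewrite /p -hm; field; lra.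
have hm1 : 1 <= m by lra.
have hp0 : 0 <= p.
  by rewrite /p; apply: Rmult_le_pos; [nra | apply: Rlt_le; apply: Rinv_0_lt_compat].
have hp1 : p <= 1.
  have hNL : L * L / 4 <= N.
    have -> : N = exp (L / 2) * exp (L / 2) by rewrite -exp_plus /N; congr exp; field.
    have := exp_ineq1_le (L / 2); nra.
  rewrite /p; apply: (Rmult_le_reg_r N) => //.
  rewrite Rmult_1_l /Rdiv Rmult_assoc Rinv_l; nra.
split; first lra.
have hNe : N = exp L by [].
have hb1 : (1 - eta) * beta >= 2 + eps / 2.
  have : (1 - eta) * (2 + eps) <= (1 - eta) * beta by apply: Rmult_le_compat_l; lra.
  lra.
set y := exp (- p * (m - eta * m)).
have hy : y = exp (- ((1 - eta) * beta * L / 2)).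
  rewrite /y; congr exp.
  have -> : - p * (m - eta * m) = - ((1 - eta) * (p * m)) by ring.
  by rewrite hpm; field.
have hy0 : 0 <= y by apply: exp_pos'.
have hmy : m * y <= c.
  apply: Rle_trans ha.
  have : m * y <= N * y by apply: Rmult_le_compat_r; lra.
  suff : N * y <= exp (- eps * L / 4) by lra.
  rewrite hy hNe -exp_plus; apply: exp_le.
  have : (1 - eta) * beta * L >= (2 + eps / 2) * L by apply: Rmult_ge_compat_r; lra.
  lra.
have hi : (1 + y) ^ mn <= exp (m * y).
  rewrite /m -exp_pow; apply: pow_incr; have := exp_ineq1_le y; lra.
have hmy0 : 0 <= m * y by apply: Rmult_le_pos; lra.
have hi2 : exp (m * y) - 1 <= 2 * (m * y).
  have h1 : exp (m * y) * exp (- (m * y)) = 1 by rewrite -exp_plus Rplus_opp_r exp_0.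
  have h2 := exp_ineq1_le (- (m * y)).
  have h3 := exp_pos (m * y).
  nra.
set x := ln 2 - eta * beta * L / 4 in hbb *.
have hx : x < 0.
  apply: Rnot_le_lt => hx; have := exp_ineq1_le x; lra.
have hii : exp (- p * (eta * m) * m / 2) * 2 ^ mn <= c.
  have -> : 2 ^ mn = exp (m * ln 2) by rewrite -exp_pow exp_ln //; lra.
  rewrite -exp_plus; apply: Rle_trans hbb; apply: exp_le.
  have -> : - p * (eta * m) * m / 2 + m * ln 2 = m * x.
    rewrite /x; have -> : - p * (eta * m) * m / 2 = - (eta * (p * m) * m / 2) by field.
    rewrite hpm; field.
  have : (m - 1) * x <= 0 by nra.
  lra.
have hiii : m * (1 - p) ^ mn <= c.
  have : (1 - p) ^ mn <= exp (m * (- p)).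
    rewrite /m -exp_pow; apply: pow_incr; have := exp_ineq1_le (- p); lra.
  have -> : m * (- p) = - (beta * L / 2) by rewrite -hpm; ring.
  move=> h.
  have : m * (1 - p) ^ mn <= N * exp (- (beta * L / 2)).
    apply: Rle_trans (Rmult_le_compat_l _ _ _ (Rlt_le _ _ hm0) h) _.
    apply: Rmult_le_compat_r; [apply: exp_pos' | lra].
  have : N * exp (- (beta * L / 2)) <= c.
    apply: Rle_trans ha; rewrite hNe -exp_plus; apply: exp_le.
    have : beta * L >= (2 + eps) * L by apply: Rmult_ge_compat_r; lra.
    nra.
  lra.
lra.
Qed.



Lemma event_of_hubs n (E : {set 'I_n * 'I_n}) (A B : {set 'I_n}) :
  ~~ odd n -> [disjoint A & B] -> #|A| = n./2 -> #|B| = n./2 ->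
  hub E B A -> hub E A B ->
  r_partition E (two_sets A B) /\
  forall k : nat, (1 <= k)%N -> forall MG MC : nat,
    is_MG E k MG -> is_MC n./2 k MC -> (MG <= 2 * MC + 2)%N.
Proof.
move=> hodd dAB cA cB hBA hAB.
have en : (n./2 + n./2 = n)%N.
  by move: (odd_double_half n); rewrite (negbTE hodd) add0n -addnn.
have cov : A :|: B = [set: 'I_n].
  have h : A :|: B == [set: 'I_n].
    rewrite eqEcard subsetT /= cardsT card_ord cardsU (disjoint_setI0 dAB) cards0 subn0 cA cB en.
    by [].
  exact/eqP.
have cov' : forall j, (j \in A) || (j \in B).
  by move=> j; rewrite -in_setU cov inE.
have CA : ~: A = B.
  apply/setP => j; rewrite inE; case/orP: (cov' j) => h.
    by rewrite h (disjointFr dAB h).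
  by rewrite h (disjointFl dAB h).
have CB : ~: B = A.
  by rewrite -CA setCK.
split; last first.
  move=> k _ MG MC; exact: (part_ii dAB cov' cA cB hBA hAB).
split.
  move=> i j; rewrite /two_sets.
  case: (boolP (nat_of_ord i == 0%N)) => hi; case: (boolP (nat_of_ord j == 0%N)) => hj.
  - move=> /eqP H; exfalso; apply: H; apply: val_inj => /=; move: hi hj; lia.
  - by move=> _.
  - by rewrite disjoint_sym.
  - move=> /eqP H; exfalso; apply: H; apply: val_inj; have := ltn_ord i; have := ltn_ord j; move: hi hj => /=; lia.
split.
  rewrite big_ord_recl big_ord_recl big_ord0 /two_sets /=.
  by rewrite setU0.
move=> i; rewrite /two_sets; case: ifP => _; [rewrite CA | rewrite CB] => //.
Qed.



Lemma ge_div_le a b L : 0 < b -> a / b <= L -> a <= b * L.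
Proof.
move=> hb h; have : b * (a / b) <= b * L by apply: Rmult_le_compat_l; lra.
have -> : b * (a / b) = a by field; lra.
done.
Qed.

Theorem theorem8 (eps beta : R) (heps : Rlt 0 eps) (hbeta : Rle (Rplus 2 eps) beta)
  (N1 N2 : forall n : nat, {set 'I_n})
  (hN : forall n : nat, ~~ odd n ->
     [disjoint N1 n & N2 n] /\ #|N1 n| = n./2 /\ #|N2 n| = n./2) :
  forall delta : R, Rlt 0 delta ->
  exists n0 : nat, forall n : nat, (n0 <= n)%N -> ~~ odd n ->
    Rle (Rminus 1 delta)
      (Prob_Gnp (Rdiv (Rmult beta (ln (INR n))) (INR n))
       (fun E => r_partition E (two_sets (N1 n) (N2 n)) /\
          forall k : nat, (1 <= k)%N -> forall MG MC : nat,
            is_MG E k MG -> is_MC n./2 k MC -> (MG <= 2 * MC + 2)%N)).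
Proof.
move=> delta hd.
set c := Rmin (delta / 16) (1 / 4).
have hc : 0 < c <= 1 / 4.
  split; [apply: Rmin_pos; lra | apply: Rmin_r].
have hc16 : c <= delta / 16 by apply: Rmin_l.
set eta := eta_of eps.
have heta0 : 0 < eta by rewrite /eta /eta_of; apply: Rdiv_lt_0_compat; lra.
have hb0 : 0 < beta by lra.
set L0 := Rmax (Rmax 1 (4 * beta)) (Rmax (- 4 * ln c / eps) (4 * (ln 2 - ln c) / (eta * beta))).
have [n0 hn0] := INR_unbounded (exp L0).
exists n0 => n hn hodd.
have hNn : exp L0 < INR n.
  apply: Rlt_le_trans hn0 _; apply: le_INR; apply/leP.
  done.
have hNpos : 0 < INR n by have := exp_pos L0; lra.
set L := ln (INR n).
have hL : L0 < L by rewrite /L -[X in X < _]ln_exp; apply: ln_increasing => //; apply: exp_pos.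
have hNL : exp L = INR n by rewrite /L exp_ln.
have hL1 : 1 <= L.
  have : 1 <= L0 by rewrite /L0; apply: Rle_trans (Rmax_l _ _); apply: Rmax_l.
  lra.
have hL4 : 4 * beta <= L.
  have : 4 * beta <= L0 by rewrite /L0; apply: Rle_trans (Rmax_l _ _); apply: Rmax_r.
  lra.
have ha : exp (- eps * L / 4) <= c.
  rewrite -[X in _ <= X]exp_ln; last lra.
  apply: exp_le.
  have : - 4 * ln c / eps <= L.
    have : - 4 * ln c / eps <= L0 by rewrite /L0; apply: Rle_trans (Rmax_r _ _); apply: Rmax_l.
    lra.
  move/(ge_div_le heps); lra.
have hbb : exp (ln 2 - eta_of eps * beta * L / 4) <= c.
  rewrite -[X in _ <= X]exp_ln; last lra.
  apply: exp_le.
  have : 4 * (ln 2 - ln c) / (eta * beta) <= L.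
    have : 4 * (ln 2 - ln c) / (eta * beta) <= L0 by rewrite /L0; apply: Rle_trans (Rmax_r _ _); apply: Rmax_r.
    lra.
  have heb : 0 < eta * beta by apply: Rmult_lt_0_compat.
  move/(ge_div_le heb); rewrite /eta; lra.
have en : (n./2 * 2 = n)%N.
  by move: (odd_double_half n); rewrite (negbTE hodd) add0n -muln2.
have hm : INR n./2 * 2 = exp L.
  rewrite hNL -[in RHS]en mult_INR; congr Rmult; simpl; ring.
have [hp hside] := side_small heps hbeta hc hL1 hL4 ha hbb hm.
have [dN [c1 c2]] := hN n hodd.
rewrite -hNL.
set p := beta * L / exp L.
have hsub : forall F, F \in flist (N2 n) (N1 n) ++ flist (N1 n) (N2 n) -> F \subset Epairs n.
  by move=> F; rewrite mem_cat => /orP [] /flist_sub.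
apply: (Rle_trans _ _ _ _ (@prob_lb n p hp _ (flist (N2 n) (N1 n) ++ flist (N1 n) (N2 n)) hsub _)).
  rewrite big_cat /=.
  have d21 : [disjoint N2 n & N1 n] by rewrite disjoint_sym.
  have hK : 0 <= eta * INR n./2 by apply: Rmult_le_pos; [lra | apply: pos_INR].
  have s1 := flist_cost hp hK d21.
  have s2 := flist_cost hp hK dN.
  rewrite c1 c2 in s1 s2.
  rewrite -/p in s1 s2 hside; rewrite -/eta in hside.
  apply: Rplus_le_compat_l; apply: Ropp_le_contravar.
  apply: Rle_trans (Rplus_le_compat _ _ _ _ s1 s2) _.
  lra.
move=> E _ HE.
apply: event_of_hubs => //.
  apply: flist_good => F HF; apply: HE; rewrite mem_cat HF //.
apply: flist_good => F HF; apply: HE; rewrite mem_cat HF orbT //.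
Qed.
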